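(* Let $L>0$ and $\delta\in\mathbb{R}$. The Korteweg–de Vries equation $$u_t+uu_x+\delta^2u_{xxx}=0$$ subject to $L$-periodic boundary conditions does not possess the finitely many determining modes property in $L^2$. That is, there is no positive integer $M$ such that for any two solutions $u_1,u_2$ (with mean-zero $L$-periodic initial data in $H^2_{\mathrm{per}}$), $\lim_{t\to\infty}\|P_M(u_1(t)-u_2(t))\|_{L^2}=0$ implies $\lim_{t\to\infty}\|u_1(t)-u_2(t)\|_{L^2}=0$.
   Context: $H^2_{\mathrm{per}}$ denotes the closure of the $L$-periodic trigonometric polynomials on $\mathbb{R}$ in the $H^2$ norm over one period; $L^2$ norms are over $[0,L]$. For a positive integer $M$, $P_M$ is the orthogonal projection onto the lowest $M$ Fourier modes (the span of $e^{i\frac{2\pi}{L}nx}$, $|n|\le M$). The equation is understood to be globally well-posed with unique solutions for such data. *)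

(* Defs.v *)
From Stdlib Require Import Reals ZArith.
From Coquelicot Require Import Coquelicot.
Open Scope R_scope.

(* An L-periodic function is represented by its Fourier coefficients
   c : Z -> C w.r.t. the basis e^{i (2 pi / L) n x}:
      u(x) = sum_{n in Z} c n * e^{i (2 pi / L) n x}. *)
Definition state := Z -> C.

Definition sumZ (f : Z -> R) : R :=
  Series (fun j : nat => f (Z.of_nat j)) +
  Series (fun j : nat => f (- Z.of_nat (S j))%Z).

Definition summableZ (f : Z -> R) : Prop :=
  ex_series (fun j : nat => Rabs (f (Z.of_nat j))) /\
  ex_series (fun j : nat => Rabs (f (- Z.of_nat (S j))%Z)).

Definition state_sub (c d : state) : state := fun n => Cminus (c n) (d n).

Definition real_state (c : state) : Prop := forall n, c (- n)%Z = Cconj (c n).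

Definition mean_zero (c : state) : Prop := c 0%Z = 0%C.

Definition H2_weight (n : Z) : R := (1 + IZR n ^ 2) ^ 2.

Definition in_H2 (c : state) : Prop :=
  summableZ (fun n => H2_weight n * Cmod (c n) ^ 2).

Definition H2_norm_sq (c : state) : R :=
  sumZ (fun n => H2_weight n * Cmod (c n) ^ 2).

(* L^2([0,L]) norm of u = sum c_n e^{i 2pi n x / L}  (Parseval) *)
Definition L2_norm (L : R) (c : state) : R :=
  sqrt (L * sumZ (fun n => Cmod (c n) ^ 2)).

Definition P (M : nat) (c : state) : state :=
  fun n => if (Z.abs n <=? Z.of_nat M)%Z then c n else 0%C.

(* Fourier coefficient n of u^2 : sum_m c_m c_{n-m} *)
Definition conv (c : state) (n : Z) : C :=
  (sumZ (fun m => Re (Cmult (c m) (c (n - m)%Z))),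
   sumZ (fun m => Im (Cmult (c m) (c (n - m)%Z)))).

(* Fourier coefficient n of  -(u u_x) - delta^2 u_xxx, with k = 2 pi / L:
     -(i k n / 2) (u^2)^_n + i delta^2 k^3 n^3 c_n                      *)
Definition kdv_rhs (L delta : R) (c : state) (n : Z) : C :=
  let k := 2 * PI / L in
  Cplus (Cmult (0, - (k * IZR n / 2)) (conv c n))
        (Cmult (0, delta ^ 2 * k ^ 3 * IZR n ^ 3) (c n)).

Definition is_kdv_solution (L delta : R) (u : R -> state) : Prop :=
  (forall t, 0 <= t -> real_state (u t) /\ in_H2 (u t)) /\
  (forall t, 0 <= t -> forall eps, 0 < eps -> exists d, 0 < d /\
     forall s, 0 <= s -> Rabs (s - t) < d ->
       H2_norm_sq (state_sub (u s) (u t)) < eps) /\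
  (forall (n : Z) t, 0 < t ->
     is_derive (fun s => u s n) t (kdv_rhs L delta (u t) n)).

Definition admissible_data (c : state) : Prop :=
  real_state c /\ mean_zero c /\ in_H2 c.

Definition globally_well_posed (L delta : R) : Prop :=
  forall c0, admissible_data c0 ->
    (exists u, is_kdv_solution L delta u /\ u 0 = c0) /\
    (forall u v, is_kdv_solution L delta u -> is_kdv_solution L delta v ->
       u 0 = c0 -> v 0 = c0 -> forall t, 0 <= t -> u t = v t).

Definition determining_modes (L delta : R) (M : nat) : Prop :=
  forall u1 u2 : R -> state,
    is_kdv_solution L delta u1 -> is_kdv_solution L delta u2 ->
    admissible_data (u1 0) -> admissible_data (u2 0) ->
    is_lim (fun t => L2_norm L (P M (state_sub (u1 t) (u2 t)))) p_infty 0 ->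
    is_lim (fun t => L2_norm L (state_sub (u1 t) (u2 t))) p_infty 0.

(* Main.v *)
Require Import Defs.
From Stdlib Require Import Reals ZArith.
From Stdlib Require Import Lra Lia List Permutation FunctionalExtensionality.
From Coquelicot Require Import Coquelicot.
Open Scope R_scope.

Fixpoint zl (a : Z) (n : nat) : list Z :=
  match n with O => nil | S n => a :: zl (a + 1)%Z n end.
Fixpoint lsum (f : Z -> R) (l : list Z) : R :=
  match l with nil => 0 | x :: l => f x + lsum f l end.

Lemma lsum_app f l1 l2 : lsum f (l1 ++ l2) = lsum f l1 + lsum f l2.
Proof. induction l1; simpl; [lra| rewrite IHl1; lra]. Qed.
Lemma lsum_ext f g l : (forall x, In x l -> f x = g x) -> lsum f l = lsum g l.
Proof. induction l; simpl; intros H; auto. rewrite H, IHl; auto. Qed.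
Lemma lsum_plus f g l : lsum (fun x => f x + g x) l = lsum f l + lsum g l.
Proof. induction l; simpl; [lra| rewrite IHl; lra]. Qed.
Lemma lsum_minus f g l : lsum (fun x => f x - g x) l = lsum f l - lsum g l.
Proof. induction l; simpl; [lra| rewrite IHl; lra]. Qed.
Lemma lsum_scal c f l : lsum (fun x => c * f x) l = c * lsum f l.
Proof. induction l; simpl; [lra| rewrite IHl; lra]. Qed.
Lemma lsum_map f g l : lsum f (map g l) = lsum (fun x => f (g x)) l.
Proof. induction l; simpl; auto. rewrite IHl; auto. Qed.
Lemma lsum_perm f l1 l2 : Permutation l1 l2 -> lsum f l1 = lsum f l2.
Proof. induction 1; simpl; lra. Qed.
Lemma lsum_rev f l : lsum f (rev l) = lsum f l.
Proof. symmetry; apply lsum_perm, Permutation_rev. Qed.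
Lemma lsum_zero f l : (forall x, In x l -> f x = 0) -> lsum f l = 0.
Proof. induction l; simpl; intros H; auto. rewrite H, IHl; auto; lra. Qed.
Lemma lsum_le f g l : (forall x, In x l -> f x <= g x) -> lsum f l <= lsum g l.
Proof. induction l; simpl; intros H; [lra|]. pose proof (H a (or_introl eq_refl)).
  pose proof (IHl (fun x h => H x (or_intror h))). lra. Qed.
Lemma lsum_abs f l : Rabs (lsum f l) <= lsum (fun x => Rabs (f x)) l.
Proof. induction l; simpl. rewrite Rabs_R0; lra. eapply Rle_trans. apply Rabs_triang. lra. Qed.
Lemma lsum_nonneg f l : (forall x, In x l -> 0 <= f x) -> 0 <= lsum f l.
Proof. intros H. rewrite <- (lsum_zero (fun _ => 0) l) by auto. apply lsum_le; auto. Qed.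
Lemma lsum_term f l j : In j l -> (forall x, In x l -> 0 <= f x) -> f j <= lsum f l.
Proof. induction l; simpl; intros Hj H; [tauto|]. destruct Hj as [<-|Hj].
  - pose proof (lsum_nonneg f l (fun x h => H x (or_intror h))). lra.
  - pose proof (IHl Hj (fun x h => H x (or_intror h))). pose proof (H a (or_introl eq_refl)). lra. Qed.
Lemma lsum_fubini (g : Z -> Z -> R) l1 l2 :
  lsum (fun n => lsum (fun m => g n m) l2) l1 = lsum (fun m => lsum (fun n => g n m) l1) l2.
Proof. induction l1; simpl. symmetry; apply lsum_zero; auto.
  rewrite IHl1, <- lsum_plus. reflexivity. Qed.

Lemma zl_In a n x : In x (zl a n) <-> (a <= x < a + Z.of_nat n)%Z.
Proof. revert a; induction n; intros a; simpl. lia. rewrite IHn. lia. Qed.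
Lemma zl_app a n m : zl a (n + m) = zl a n ++ zl (a + Z.of_nat n) m.
Proof. revert a; induction n; intros a; simpl. f_equal; lia. rewrite IHn. do 3 f_equal. lia. Qed.
Lemma zl_refl s a n : map (fun m => s - m)%Z (zl a n) = rev (zl (s - a - Z.of_nat n + 1) n).
Proof. revert a; induction n; intros a. reflexivity.
  replace (zl (s - a - Z.of_nat (S n) + 1) (S n)) with (zl (s - a - Z.of_nat (S n) + 1) (n+1)) by (f_equal; lia).
  rewrite zl_app, rev_app_distr. cbn [zl map rev app]. rewrite IHn. f_equal; [lia| f_equal; f_equal; lia]. Qed.
Lemma lsum_sub f a n c m : (a <= c)%Z -> (c + Z.of_nat m <= a + Z.of_nat n)%Z ->
  (forall x, In x (zl a n) -> ~ In x (zl c m) -> f x = 0) -> lsum f (zl a n) = lsum f (zl c m).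
Proof. intros H1 H2 H3. set (p := Z.to_nat (c - a)). set (r := (n - p - m)%nat).
  assert (E : n = (p + (m + r))%nat) by (unfold r, p; lia). 
  rewrite E, !zl_app, !lsum_app. replace (a + Z.of_nat p)%Z with c by (unfold p; lia).
  rewrite (lsum_zero f (zl a p)), (lsum_zero f (zl (c + Z.of_nat m) r)); try lra.
  - intros x Hx. apply H3. rewrite zl_In in *; lia. rewrite zl_In in *; lia.
  - intros x Hx. apply H3. rewrite zl_In in *; lia. rewrite zl_In in *; lia.
Qed.

Definition IZ (N : nat) : list Z := zl (- Z.of_nat N) (2 * N + 1).
Lemma IZ_In N x : In x (IZ N) <-> (Z.abs x <= Z.of_nat N)%Z.
Proof. unfold IZ; rewrite zl_In; lia. Qed.
Lemma lsum_IZ_opp f N : lsum f (IZ N) = lsum (fun x => f (- x)%Z) (IZ N).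
Proof. unfold IZ. transitivity (lsum f (map (fun m => 0 - m)%Z (zl (- Z.of_nat N) (2*N+1)))).
  rewrite zl_refl, lsum_rev. f_equal. f_equal. lia.
  rewrite lsum_map. apply lsum_ext. intros; f_equal; lia. Qed.
Lemma lsum_IZ_refl (phi : Z -> R) N n : (Z.abs n <= Z.of_nat N)%Z ->
  (forall m, phi m <> 0 -> (Z.abs m <= Z.of_nat N)%Z /\ (Z.abs (n - m) <= Z.of_nat N)%Z) ->
  lsum phi (IZ N) = lsum (fun m => phi (n - m)%Z) (IZ N).
Proof. intros Hn Hs.
  assert (A : lsum phi (IZ N) = lsum phi (zl (n - 2 * Z.of_nat N) (4 * N + 1))).
  { unfold IZ. symmetry. apply lsum_sub; try lia. intros x _ Hx. destruct (Req_dec (phi x) 0); auto.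
    exfalso. apply Hx. apply zl_In. apply Hs in H. lia. }
  assert (B : lsum (fun m => phi (n - m)%Z) (IZ N) = lsum (fun m => phi (n - m)%Z) (zl (- 2 * Z.of_nat N) (4 * N + 1))).
  { unfold IZ. symmetry. apply lsum_sub; try lia. intros x _ Hx. destruct (Req_dec (phi (n - x)%Z) 0); auto.
    exfalso. apply Hx. apply zl_In. apply Hs in H. lia. }
  rewrite A, B. rewrite <- (lsum_map phi (fun m => (n - m)%Z)), zl_refl, lsum_rev. f_equal. f_equal. lia. Qed.

Definition Tt (d : state) (n m : Z) : R :=
  let z := Cmult (d m) (d (n - m)%Z) in
  fst (d n) * snd z - snd (d n) * fst z.

Lemma Tt_sym1 d n m : Tt d n (n - m)%Z = Tt d n m.
Proof. unfold Tt. replace (n - (n - m))%Z with m by lia.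
  destruct (d m), (d (n - m)%Z); simpl; ring. Qed.

Lemma Tt_sym2 d n m : real_state d -> Tt d (- m)%Z (- n)%Z = Tt d n m.
Proof. intros Hr. unfold Tt. replace (- m - - n)%Z with (n - m)%Z by lia.
  rewrite (Hr m), (Hr n). destruct (d m), (d n), (d (n - m)%Z); simpl; ring. Qed.

Lemma Tt_supp (d : state) N n m : (forall j, (Z.of_nat N < Z.abs j)%Z -> d j = 0%C) ->
  Tt d n m <> 0 -> (Z.abs m <= Z.of_nat N)%Z /\ (Z.abs (n - m) <= Z.of_nat N)%Z.
Proof. intros Hs H. split.
  - destruct (Z_le_gt_dec (Z.abs m) (Z.of_nat N)) as [?|Hc]; auto.
    exfalso; apply H; unfold Tt; rewrite (Hs _ (Z.gt_lt _ _ Hc)); simpl; ring.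
  - destruct (Z_le_gt_dec (Z.abs (n - m)) (Z.of_nat N)) as [?|Hc]; auto.
    exfalso; apply H; unfold Tt; rewrite (Hs _ (Z.gt_lt _ _ Hc)); simpl; ring. Qed.

Lemma box_zero (d : state) N : real_state d -> (forall j, (Z.of_nat N < Z.abs j)%Z -> d j = 0%C) ->
  lsum (fun n => IZR n * lsum (fun m => Tt d n m) (IZ N)) (IZ N) = 0.
Proof. intros Hr Hs.
  set (Q := lsum (fun n => IZR n * lsum (fun m => Tt d n m) (IZ N)) (IZ N)).
  set (Q' := lsum (fun n => lsum (fun m => IZR m * Tt d n m) (IZ N)) (IZ N)).
  assert (A : Q = - Q').
  { unfold Q, Q'.
    transitivity (lsum (fun n => lsum (fun m => IZR n * Tt d (-m) (-n)) (IZ N)) (IZ N)).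
    { apply lsum_ext; intros n _. rewrite <- lsum_scal. apply lsum_ext; intros m _. rewrite Tt_sym2; auto. }
    rewrite lsum_fubini. rewrite lsum_IZ_opp.
    transitivity (-1 * lsum (fun n => lsum (fun m => IZR m * Tt d n m) (IZ N)) (IZ N)); [|ring].
    rewrite <- lsum_scal. apply lsum_ext. intros x _. rewrite lsum_IZ_opp.
    rewrite <- lsum_scal. apply lsum_ext. intros n _. rewrite opp_IZR. replace (- - x)%Z with x by lia.
    replace (- - n)%Z with n by lia. ring. }
  assert (B : 2 * Q' = Q).
  { unfold Q, Q'. rewrite <- lsum_scal. apply lsum_ext. intros n Hn. apply IZ_In in Hn.
    assert (E : lsum (fun m => IZR m * Tt d n m) (IZ N) = lsum (fun m => (IZR n - IZR m) * Tt d n m) (IZ N)).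
    { rewrite (lsum_IZ_refl (fun m => IZR m * Tt d n m) N n Hn).
      - apply lsum_ext. intros m _. rewrite Tt_sym1, minus_IZR. reflexivity.
      - intros m Hm. apply (Tt_supp d N n m Hs). intro Hc; apply Hm; rewrite Hc; ring. }
    assert (E2 : lsum (fun m => (IZR n - IZR m) * Tt d n m) (IZ N) = IZR n * lsum (fun m => Tt d n m) (IZ N) - lsum (fun m => IZR m * Tt d n m) (IZ N)).
    { rewrite <- lsum_scal, <- lsum_minus. apply lsum_ext; intros; ring. }
    lra. }
  lra. Qed.

Lemma ser_lim (a : nat -> R) l : is_series a l <-> is_lim_seq (sum_n a) l.
Proof. split; intro H; exact H. Qed.

Lemma lsum_zl_nat g a n : lsum g (zl (Z.of_nat a) (S n)) = sum_n (fun j => g (Z.of_nat (a + j))) n.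
Proof. induction n.
  - rewrite sum_O. simpl. rewrite Nat.add_0_r. ring.
  - replace (S (S n)) with (S n + 1)%nat by lia. rewrite zl_app, lsum_app, IHn, sum_Sn.
    simpl. unfold plus; simpl. f_equal. rewrite Rplus_0_r. f_equal. lia. Qed.

Definition posp (f : Z -> R) (j : nat) := f (Z.of_nat j).
Definition negp (f : Z -> R) (j : nat) := f (- Z.of_nat (S j))%Z.

Lemma lsum_IZ_split f K : lsum f (IZ (S K)) = sum_n (posp f) (S K) + sum_n (negp f) K.
Proof. unfold IZ. replace (2 * S K + 1)%nat with (S K + S (S K))%nat by lia.
  rewrite zl_app, lsum_app. replace (- Z.of_nat (S K) + Z.of_nat (S K))%Z with (Z.of_nat 0) by lia.
  rewrite lsum_zl_nat. rewrite Rplus_comm. f_equal.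
  transitivity (lsum f (map (fun m => 0 - m)%Z (zl (Z.of_nat 1) (S K)))).
  - rewrite zl_refl, lsum_rev. f_equal. f_equal. lia.
  - rewrite lsum_map, lsum_zl_nat. apply sum_n_ext. intros j. unfold negp. f_equal. Qed.

Lemma is_series_fin (a : nat -> R) N : (forall j, (N < j)%nat -> a j = 0) -> is_series a (sum_n a N).
Proof. intros H. apply ser_lim. eapply is_lim_seq_ext_loc; [| apply is_lim_seq_const].
  exists N. intros n Hn. induction Hn. reflexivity. rewrite sum_Sn, <- IHHn, H by lia.
  unfold plus; simpl. symmetry; apply Rplus_0_r. Qed.

Lemma Series_zero : Series (fun _ => 0) = 0.
Proof. apply is_series_unique. pose proof (is_series_fin (fun _ => 0) 0 (fun _ _ => eq_refl)).
  rewrite sum_O in H. exact H. Qed.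

Lemma summ_pos f : summableZ f -> ex_series (posp f).
Proof. intros [H _]. apply ex_series_Rabs. exact H. Qed.
Lemma summ_neg f : summableZ f -> ex_series (negp f).
Proof. intros [_ H]. apply ex_series_Rabs. exact H. Qed.

Lemma sumZ_lim f : summableZ f -> is_lim_seq (fun K => lsum f (IZ (S K))) (sumZ f).
Proof. intros H. eapply is_lim_seq_ext. intros K. symmetry. apply lsum_IZ_split.
  apply is_lim_seq_plus'.
  - apply (is_lim_seq_incr_1 (sum_n (posp f))). apply ser_lim, Series_correct, summ_pos, H.
  - apply ser_lim, Series_correct, summ_neg, H. Qed.

Lemma sumZ_fin f K : (forall j, (Z.of_nat (S K) < Z.abs j)%Z -> f j = 0) ->
  summableZ f /\ sumZ f = lsum f (IZ (S K)).
Proof. intros H. split; [split|].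
  - exists (sum_n (fun j => Rabs (posp f j)) (S K)). apply is_series_fin. intros j Hj.
    unfold posp. rewrite H. apply Rabs_R0. lia.
  - exists (sum_n (fun j => Rabs (negp f j)) K). apply is_series_fin. intros j Hj.
    unfold negp. rewrite H. apply Rabs_R0. lia.
  - unfold sumZ. rewrite lsum_IZ_split. f_equal; apply is_series_unique; apply is_series_fin;
    intros j Hj; [unfold posp|unfold negp]; apply H; lia. Qed.

Lemma sumZ_zero : sumZ (fun _ => 0) = 0.
Proof. unfold sumZ. rewrite Series_zero. ring. Qed.
Lemma summ_zero : summableZ (fun _ => 0).
Proof. apply (sumZ_fin _ 0). auto. Qed.

Lemma sumZ_ext f g : (forall j, f j = g j) -> sumZ f = sumZ g.
Proof. intros H. unfold sumZ. f_equal; apply Series_ext; intros; apply H. Qed.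

Lemma ex_series_le_R (a b : nat -> R) : (forall n, Rabs (a n) <= b n) -> ex_series b -> ex_series a.
Proof. intros H1 H2. apply (@ex_series_le R_AbsRing R_CompleteNormedModule a b); auto. Qed.

Lemma summ_le f g : summableZ g -> (forall j, Rabs (f j) <= g j) -> summableZ f.
Proof. intros [H1 H2] H. split.
  - eapply ex_series_le_R; [| exact H1]. intros j. rewrite Rabs_Rabsolu. eapply Rle_trans. apply H. apply Rle_abs.
  - eapply ex_series_le_R; [| exact H2]. intros j. rewrite Rabs_Rabsolu. eapply Rle_trans. apply H. apply Rle_abs. Qed.

Lemma summ_abs_ex f : summableZ f -> ex_series (fun j => Rabs (posp f j)) /\ ex_series (fun j => Rabs (negp f j)).
Proof. intros [H1 H2]. split; assumption. Qed.

Lemma sumZ_abs_le f g : summableZ g -> (forall j, Rabs (f j) <= g j) -> Rabs (sumZ f) <= sumZ g.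
Proof. intros Hg H. pose proof (summ_le f g Hg H) as Hf. destruct Hf as [F1 F2]. destruct Hg as [G1 G2].
  unfold sumZ. eapply Rle_trans. apply Rabs_triang.
  apply Rplus_le_compat.
  - eapply Rle_trans. apply Series_Rabs. exact F1. apply Series_le.
    intros j; split. apply Rabs_pos. apply H. apply ex_series_Rabs; exact G1.
  - eapply Rle_trans. apply Series_Rabs. exact F2. apply Series_le.
    intros j; split. apply Rabs_pos. apply H. apply ex_series_Rabs; exact G2. Qed.

Lemma sumZ_nonneg g : summableZ g -> (forall j, 0 <= g j) -> 0 <= sumZ g.
Proof. intros Hg H. assert (H0 : Rabs (sumZ (fun _ => 0)) <= sumZ g).
  { apply sumZ_abs_le; auto. intros; rewrite Rabs_R0; auto. }
  rewrite sumZ_zero, Rabs_R0 in H0. exact H0. Qed.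

Lemma sumZ_plus f g : summableZ f -> summableZ g -> sumZ (fun j => f j + g j) = sumZ f + sumZ g.
Proof. intros Hf Hg. unfold sumZ.
  transitivity (Series (fun n => posp f n + posp g n) + Series (fun n => negp f n + negp g n)). reflexivity.
  rewrite (Series_plus (posp f) (posp g)), (Series_plus (negp f) (negp g)).
  unfold posp, negp. ring. all: first [apply summ_pos|apply summ_neg]; auto. Qed.
Lemma sumZ_minus f g : summableZ f -> summableZ g -> sumZ (fun j => f j - g j) = sumZ f - sumZ g.
Proof. intros Hf Hg. unfold sumZ.
  transitivity (Series (fun n => posp f n - posp g n) + Series (fun n => negp f n - negp g n)). reflexivity.
  rewrite (Series_minus (posp f) (posp g)), (Series_minus (negp f) (negp g)).
  unfold posp, negp. ring. all: first [apply summ_pos|apply summ_neg]; auto. Qed.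
Lemma sumZ_scal c f : sumZ (fun j => c * f j) = c * sumZ f.
Proof. unfold sumZ.
  transitivity (Series (fun n => c * posp f n) + Series (fun n => c * negp f n)). reflexivity.
  rewrite (Series_scal_l c (posp f)), (Series_scal_l c (negp f)). unfold posp, negp. ring. Qed.
Lemma summ_plus f g : summableZ f -> summableZ g -> summableZ (fun j => f j + g j).
Proof. intros Hf Hg. apply (summ_le _ (fun j => Rabs (f j) + Rabs (g j))).
  - destruct Hf as [F1 F2], Hg as [G1 G2]. split.
    + eapply ex_series_ext; [|apply (ex_series_plus (fun j => Rabs (f (Z.of_nat j))) (fun j => Rabs (g (Z.of_nat j))) F1 G1)]. intros j. unfold plus, scal; simpl. unfold mult; simpl. rewrite (Rabs_right (Rabs _ + Rabs _)). reflexivity. apply Rle_ge, Rplus_le_le_0_compat; apply Rabs_pos.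
    + eapply ex_series_ext; [|apply (ex_series_plus (fun j => Rabs (f (- Z.of_nat (S j))%Z)) (fun j => Rabs (g (- Z.of_nat (S j))%Z)) F2 G2)]. intros j. unfold plus, scal; simpl. unfold mult; simpl. rewrite (Rabs_right (Rabs _ + Rabs _)). reflexivity. apply Rle_ge, Rplus_le_le_0_compat; apply Rabs_pos.
  - intros; apply Rabs_triang. Qed.
Lemma summ_scal c f : summableZ f -> summableZ (fun j => c * f j).
Proof. intros Hf. apply (summ_le _ (fun j => Rabs c * Rabs (f j))).
  - destruct Hf as [F1 F2]. split.
    + eapply ex_series_ext; [|apply (ex_series_scal_l (Rabs c) (fun j => Rabs (f (Z.of_nat j))) F1)]. intros j. unfold plus, scal; simpl. unfold mult; simpl. rewrite (Rabs_right (Rabs _ * Rabs _)). reflexivity. apply Rle_ge, Rmult_le_pos; apply Rabs_pos.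
    + eapply ex_series_ext; [|apply (ex_series_scal_l (Rabs c) (fun j => Rabs (f (- Z.of_nat (S j))%Z)) F2)]. intros j. unfold plus, scal; simpl. unfold mult; simpl. rewrite (Rabs_right (Rabs _ * Rabs _)). reflexivity. apply Rle_ge, Rmult_le_pos; apply Rabs_pos.
  - intros; rewrite Rabs_mult; apply Rle_refl. Qed.

Lemma lsum_le_sumZ f K : summableZ f -> (forall j, 0 <= f j) -> lsum f (IZ (S K)) <= sumZ f.
Proof. intros Hf H. set (g := fun j => if Z_le_gt_dec (Z.abs j) (Z.of_nat (S K)) then f j else 0).
  destruct (sumZ_fin g K) as [Gs Ge].
  { intros j Hj. unfold g. destruct Z_le_gt_dec; auto. lia. }
  assert (E : lsum f (IZ (S K)) = sumZ g).
  { rewrite Ge. apply lsum_ext. intros x Hx. apply IZ_In in Hx. unfold g. destruct Z_le_gt_dec; auto; lia. }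
  rewrite E. unfold sumZ. destruct Hf as [F1 F2]. apply Rplus_le_compat; apply Series_le.
  1,3: intros j; unfold g; destruct Z_le_gt_dec; split; auto; lra.
  all: apply ex_series_Rabs; assumption. Qed.

Lemma term_le_sumZ f j : summableZ f -> (forall j, 0 <= f j) -> f j <= sumZ f.
Proof. intros Hf H. eapply Rle_trans; [| apply (lsum_le_sumZ f (Z.abs_nat j) Hf H)].
  apply lsum_term; auto. apply IZ_In. lia. Qed.

Lemma is_lim_inv2 : is_lim_seq (fun n => / (INR n + 2)) 0.
Proof. replace (Finite 0) with (Rbar_inv p_infty) by reflexivity.
  apply is_lim_seq_inv. eapply is_lim_seq_plus. apply is_lim_seq_INR. apply is_lim_seq_const.
  reflexivity. discriminate. Qed.

Lemma tele_ser : is_series (fun j => / (INR j + 1) - / (INR j + 2)) 1.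
Proof. apply ser_lim. eapply is_lim_seq_ext with (u := fun n => 1 - / (INR n + 2)).
  { intros n. induction n. rewrite sum_O. simpl. field.
    rewrite sum_Sn, <- IHn. unfold plus; cbn -[INR]. rewrite S_INR. field.
    split; apply Rgt_not_eq; pose proof (pos_INR n); lra. }
  replace (Finite 1) with (Finite (1 - 0)) by (f_equal; ring).
  apply is_lim_seq_minus'. apply is_lim_seq_const. apply is_lim_inv2. Qed.

Lemma ex_inv_sq : ex_series (fun j => 8 * (/ (INR j + 1) - / (INR j + 2))).
Proof. apply (ex_series_scal_l 8 (fun j => / (INR j + 1) - / (INR j + 2))). eexists; apply tele_ser. Qed.

Definition qw (n : Z) : R := 2 / (1 + IZR n ^ 2).
Definition C2 : R := sumZ qw.

Lemma qw_bound (x : R) : 0 <= x -> forall y, x <= Rabs y -> Rabs (2 / (1 + y ^ 2)) <= 8 * (/ (x + 1) - / (x + 2)).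
Proof. intros Hx y Hy. assert (0 <= y^2) by nra.
  rewrite Rabs_right. 2: { apply Rle_ge. unfold Rdiv. apply Rmult_le_pos. lra. apply Rlt_le, Rinv_0_lt_compat; lra. }
  assert (x ^ 2 <= y ^ 2). { assert (Rabs y ^2 = y^2) by (apply pow2_abs). nra. }
  replace (8 * (/ (x + 1) - / (x + 2))) with (8 / ((x+1)*(x+2))) by (field; lra).
  apply Rmult_le_reg_r with ((1 + y^2) * ((x+1)*(x+2))). nra.
  field_simplify; try lra. nra. Qed.

Lemma qw_summ : summableZ qw.
Proof. split; eapply ex_series_le_R; try apply ex_inv_sq; intros j; rewrite Rabs_Rabsolu; unfold qw.
  - apply qw_bound. apply pos_INR. rewrite <- INR_IZR_INZ, Rabs_right. lra. apply Rle_ge, pos_INR.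
  - apply qw_bound. apply pos_INR. rewrite opp_IZR, <- INR_IZR_INZ, Rabs_Ropp, Rabs_right, S_INR. lra.
    apply Rle_ge, pos_INR. Qed.

Lemma qw_nonneg n : 0 <= qw n.
Proof. unfold qw, Rdiv. apply Rmult_le_pos. lra. apply Rlt_le, Rinv_0_lt_compat. nra. Qed.
Lemma C2_nonneg : 0 <= C2.
Proof. apply sumZ_nonneg. apply qw_summ. apply qw_nonneg. Qed.

Lemma im_le_Cmod (z : C) : Rabs (snd z) <= Cmod z.
Proof. eapply Rle_trans; [| apply Rmax_Cmod]. apply Rmax_r. Qed.
Lemma fst_le_Cmod (z : C) : Rabs (fst z) <= Cmod z.
Proof. eapply Rle_trans; [| apply Rmax_Cmod]. apply Rmax_l. Qed.

Definition trunc (c : state) (N : nat) : state :=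
  fun j => if Z_le_gt_dec (Z.abs j) (Z.of_nat N) then c j else 0%C.

Lemma trunc_real c N : real_state c -> real_state (trunc c N).
Proof. intros H j. unfold trunc. rewrite Z.abs_opp. destruct Z_le_gt_dec; auto.
  apply injective_projections; simpl; ring. Qed.

Lemma trunc_supp c N j : (Z.of_nat N < Z.abs j)%Z -> trunc c N j = 0%C.
Proof. intros H. unfold trunc. destruct Z_le_gt_dec; auto. lia. Qed.

Definition Dk (c : state) (N : nat) : R :=
  lsum (fun n => IZR n * (fst (c n) * snd (conv c n) - snd (c n) * fst (conv c n))) (IZ N).

Lemma H2w_nonneg c n : 0 <= H2_weight n * Cmod (c n) ^ 2.
Proof. unfold H2_weight. apply Rmult_le_pos; apply pow2_ge_0. Qed.

Lemma H2_nonneg c : in_H2 c -> 0 <= H2_norm_sq c.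
Proof. intros H. apply sumZ_nonneg; auto. intros; apply H2w_nonneg. Qed.

Lemma H2_term c j : in_H2 c -> ((1 + IZR j ^ 2) * Cmod (c j)) ^ 2 <= H2_norm_sq c.
Proof. intros H. replace (((1 + IZR j ^ 2) * Cmod (c j)) ^ 2) with (H2_weight j * Cmod (c j) ^ 2) by (unfold H2_weight; ring).
  apply (term_le_sumZ (fun n => H2_weight n * Cmod (c n) ^ 2) j H). intros; apply H2w_nonneg. Qed.

Lemma sA c B j : in_H2 c -> H2_norm_sq c <= B -> (1 + IZR j ^ 2) * Cmod (c j) <= 1 + B.
Proof. intros H HB. pose proof (H2_term c j H). pose proof (Cmod_ge_0 (c j)).
  assert (0 <= IZR j ^ 2) by apply pow2_ge_0.
  set (X := (1 + IZR j ^ 2) * Cmod (c j)) in *. assert (0 <= X) by (unfold X; nra). nra. Qed.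

Lemma sA' c B j : in_H2 c -> H2_norm_sq c <= B -> Cmod (c j) <= 1 + B.
Proof. intros H HB. pose proof (sA c B j H HB). pose proof (Cmod_ge_0 (c j)).
  assert (0 <= IZR j ^ 2) by apply pow2_ge_0. nra. Qed.

Definition vv (c : state) (j : Z) : R := (1 + Rabs (IZR j)) * Cmod (c j).

Lemma vv_nonneg c j : 0 <= vv c j.
Proof. unfold vv. apply Rmult_le_pos. pose proof (Rabs_pos (IZR j)); lra. apply Cmod_ge_0. Qed.

Lemma vbound c j : Rabs (vv c j) <= / 2 * (H2_weight j * Cmod (c j) ^ 2 + qw j).
Proof. rewrite Rabs_right by (apply Rle_ge, vv_nonneg). unfold vv, qw, H2_weight.
  set (s := Cmod (c j)). set (r := Rabs (IZR j)). assert (Hs : 0 <= s) by apply Cmod_ge_0.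
  assert (Hr : 0 <= r) by apply Rabs_pos. assert (Hr2 : IZR j ^ 2 = r ^ 2) by (unfold r; symmetry; apply pow2_abs).
  rewrite Hr2. set (t := 1 + r ^ 2). assert (Ht : 1 <= t) by (unfold t; nra).
  set (it := / t). assert (Hit : it * t = 1) by (unfold it; field; lra). assert (0 < it) by (unfold it; apply Rinv_0_lt_compat; lra).
  unfold Rdiv. fold it.
  assert (H1 : (1 + r) ^ 2 <= 2 * t) by (unfold t; pose proof (pow2_ge_0 (1 - r)); nra).
  assert (H2 : 0 <= (t * s - (1 + r) * it) ^ 2) by apply pow2_ge_0.
  assert (H3 : (1 + r) ^ 2 * it * it <= 2 * it). { assert (E: 2 * t * it * it = 2 * it) by (replace (2*t*it*it) with (2*it*(it*t)) by ring; rewrite Hit; ring).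
    rewrite <- E.
    apply Rmult_le_compat_r. lra. apply Rmult_le_compat_r; lra. }
  assert (H4 : (t * s - (1 + r) * it) ^ 2 = t^2 * s^2 - 2 * (1 + r) * s * (it * t) + (1+r)^2 * it * it) by ring.
  rewrite Hit in H4. nra. Qed.

Lemma vv_summ c : in_H2 c -> summableZ (vv c).
Proof. intros H. apply (summ_le _ (fun j => / 2 * (H2_weight j * Cmod (c j) ^ 2 + qw j))).
  apply summ_scal, summ_plus; auto. apply qw_summ. apply vbound. Qed.

Lemma vv_sum c B : in_H2 c -> H2_norm_sq c <= B -> sumZ (vv c) <= / 2 * (B + C2).
Proof. intros H HB. eapply Rle_trans. apply Rle_abs. eapply Rle_trans. apply sumZ_abs_le; [| apply vbound].
  apply summ_scal, summ_plus; auto. apply qw_summ.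
  rewrite sumZ_scal, sumZ_plus; auto. 2: apply qw_summ. unfold C2. fold (H2_norm_sq c). lra. Qed.

Lemma s_le_vv c j : Cmod (c j) <= vv c j.
Proof. unfold vv. pose proof (Rabs_pos (IZR j)). pose proof (Cmod_ge_0 (c j)). nra. Qed.

Lemma prod_summ c B n (pr : C -> R) : in_H2 c -> H2_norm_sq c <= B -> (forall z, Rabs (pr z) <= Cmod z) ->
  summableZ (fun m => pr (Cmult (c m) (c (n - m)%Z))).
Proof. intros H HB Hpr. apply (summ_le _ (fun m => (1 + B) * vv c m)). apply summ_scal, vv_summ, H.
  intros m. eapply Rle_trans. apply Hpr. rewrite Cmod_mult. pose proof (sA' c B (n - m)%Z H HB).
  pose proof (s_le_vv c m). pose proof (Cmod_ge_0 (c m)). pose proof (Cmod_ge_0 (c (n-m)%Z)). nra. Qed.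

Lemma err_pt c B K n m (pr : C -> R) : in_H2 c -> H2_norm_sq c <= B -> (forall z, Rabs (pr z) <= Cmod z) ->
  INR (S K) * Rabs (pr (Cmult (c m) (c (n - m)%Z)) - pr (Cmult (trunc c (S K) m) (trunc c (S K) (n - m)%Z)))
  <= (1 + B) * vv c m.
Proof. intros H HB Hpr. set (N := S K). pose proof (vv_nonneg c m) as Hv. pose proof (H2_nonneg c H).
  assert (HN : 1 <= INR N) by (unfold N; rewrite S_INR; pose proof (pos_INR K); lra).
  unfold trunc. destruct (Z_le_gt_dec (Z.abs m) (Z.of_nat N)) as [Hm|Hm];
  destruct (Z_le_gt_dec (Z.abs (n - m)) (Z.of_nat N)) as [Hnm|Hnm].
  - unfold Rminus. rewrite Rplus_opp_r, Rabs_R0, Rmult_0_r. nra.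
  - assert (Z0 : pr (Cmult (c m) 0%C) = 0).
    { pose proof (Hpr (Cmult (c m) 0%C)) as Q. rewrite Cmod_mult, Cmod_0, Rmult_0_r in Q.
      pose proof (Rabs_pos (pr (Cmult (c m) 0%C))). apply Rabs_eq_0. lra. }
    rewrite Z0, Rminus_0_r. 
    assert (E : 1 + IZR (n - m) ^ 2 >= INR N).
    { assert (Q : IZR (Z.abs (n - m)) >= INR N) by (rewrite INR_IZR_INZ; apply Rle_ge, IZR_le; lia).
      rewrite abs_IZR in Q. assert (Q2 : Rabs (IZR (n-m)) ^2 = IZR (n - m) ^ 2) by apply pow2_abs.
      pose proof (Rabs_pos (IZR (n - m))). nra. }
    pose proof (sA c B (n - m)%Z H HB) as Q1. pose proof (Hpr (Cmult (c m) (c (n - m)%Z))) as Q2. rewrite Cmod_mult in Q2.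
    pose proof (s_le_vv c m). pose proof (Cmod_ge_0 (c m)). pose proof (Cmod_ge_0 (c (n-m)%Z)).
    assert (Q3 : INR N * Cmod (c (n - m)%Z) <= 1 + B) by nra. nra.
  - assert (Z0 : pr (Cmult 0%C (c (n - m)%Z)) = 0).
    { pose proof (Hpr (Cmult 0%C (c (n - m)%Z))) as Q. rewrite Cmod_mult, Cmod_0, Rmult_0_l in Q.
      pose proof (Rabs_pos (pr (Cmult 0%C (c (n - m)%Z)))). apply Rabs_eq_0. lra. }
    rewrite Z0, Rminus_0_r.
    assert (E : Rabs (IZR m) >= INR N) by (rewrite <- abs_IZR, INR_IZR_INZ; apply Rle_ge, IZR_le; lia).
    pose proof (sA' c B (n - m)%Z H HB) as Q1. pose proof (Hpr (Cmult (c m) (c (n - m)%Z))) as Q2. rewrite Cmod_mult in Q2.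
    pose proof (Cmod_ge_0 (c m)). pose proof (Cmod_ge_0 (c (n-m)%Z)).
    assert (Q3 : INR N * Cmod (c m) <= vv c m) by (unfold vv; nra). nra.
  - assert (Z0 : pr (Cmult 0%C 0%C) = 0).
    { pose proof (Hpr (Cmult 0%C 0%C)) as Q. rewrite Cmod_mult, Cmod_0, Rmult_0_l in Q.
      pose proof (Rabs_pos (pr (Cmult 0%C 0%C))). apply Rabs_eq_0. lra. }
    rewrite Z0, Rminus_0_r.
    assert (E : Rabs (IZR m) >= INR N) by (rewrite <- abs_IZR, INR_IZR_INZ; apply Rle_ge, IZR_le; lia).
    pose proof (sA' c B (n - m)%Z H HB) as Q1. pose proof (Hpr (Cmult (c m) (c (n - m)%Z))) as Q2. rewrite Cmod_mult in Q2.
    pose proof (Cmod_ge_0 (c m)). pose proof (Cmod_ge_0 (c (n-m)%Z)).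
    assert (Q3 : INR N * Cmod (c m) <= vv c m) by (unfold vv; nra). nra.
Qed.

Lemma ep_bound c B K n (pr : C -> R) : in_H2 c -> H2_norm_sq c <= B -> (forall z, Rabs (pr z) <= Cmod z) ->
  (forall w, pr (Cmult 0%C w) = 0) ->
  Rabs (sumZ (fun m => pr (Cmult (c m) (c (n - m)%Z))) -
        lsum (fun m => pr (Cmult (trunc c (S K) m) (trunc c (S K) (n - m)%Z))) (IZ (S K)))
  <= (1 + B) * / INR (S K) * (/ 2 * (B + C2)).
Proof. intros H HB Hpr Hp0. set (N := S K).
  assert (HN : 0 < INR N) by (unfold N; rewrite S_INR; pose proof (pos_INR K); lra).
  destruct (sumZ_fin (fun m => pr (Cmult (trunc c N m) (trunc c N (n - m)%Z))) K) as [Fs Fe].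
  { intros j Hj. unfold N. rewrite trunc_supp by lia. apply Hp0. }
  fold N in Fe. rewrite <- Fe. rewrite <- sumZ_minus; auto. 2: apply (prod_summ c B); auto.
  pose proof (H2_nonneg c H).
  eapply Rle_trans. apply (sumZ_abs_le _ (fun m => (1 + B) * / INR N * vv c m)).
  - apply summ_scal, vv_summ, H.
  - intros m. pose proof (err_pt c B K n m pr H HB Hpr). fold N in H1.
    apply Rmult_le_reg_l with (INR N). lra. 
    replace (INR N * ((1 + B) * / INR N * vv c m)) with ((1 + B) * vv c m) by (field; lra). exact H1.
  - rewrite sumZ_scal. apply Rmult_le_compat_l. apply Rmult_le_pos. lra. apply Rlt_le, Rinv_0_lt_compat; lra.
    apply vv_sum; auto. Qed.

Lemma Dk_bound c B K : real_state c -> in_H2 c -> H2_norm_sq c <= B ->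
  Rabs (Dk c (S K)) <= (1 + B) * (B + C2) ^ 2 / (2 * INR (S K)).
Proof. intros Hr H HB. set (N := S K). set (d := trunc c N).
  assert (HN : 0 < INR N) by (unfold N; rewrite S_INR; pose proof (pos_INR K); lra).
  pose proof (H2_nonneg c H) as HB0. pose proof C2_nonneg as HC2.
  set (E := (1 + B) * / INR N * (/ 2 * (B + C2))).
  set (ep := fun n => fst (conv c n) - lsum (fun m => fst (Cmult (d m) (d (n - m)%Z))) (IZ N)).
  set (eq := fun n => snd (conv c n) - lsum (fun m => snd (Cmult (d m) (d (n - m)%Z))) (IZ N)).
  assert (Hep : forall n, Rabs (ep n) <= E).
  { intros n. unfold ep, conv, d, E, N. simpl fst. apply (ep_bound c B K n fst); auto.
    apply fst_le_Cmod. intros w; simpl; ring. }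
  assert (Heq : forall n, Rabs (eq n) <= E).
  { intros n. unfold eq, conv, d, E, N. simpl snd. apply (ep_bound c B K n snd); auto.
    apply im_le_Cmod. intros w; simpl; ring. }
  assert (Split : Dk c N = lsum (fun n => IZR n * lsum (fun m => Tt d n m) (IZ N)) (IZ N) +
     lsum (fun n => IZR n * (fst (c n) * eq n - snd (c n) * ep n)) (IZ N)).
  { unfold Dk. rewrite <- lsum_plus. apply lsum_ext. intros n Hn. apply IZ_In in Hn.
    assert (Dn : d n = c n) by (unfold d, trunc; destruct Z_le_gt_dec; auto; lia).
    unfold Tt. rewrite lsum_minus, lsum_scal, lsum_scal. unfold ep, eq. rewrite Dn. ring. }
  rewrite box_zero in Split. 2: apply trunc_real, Hr. 2: intros j Hj; apply trunc_supp; exact Hj.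
  fold N. rewrite Split, Rplus_0_l.
  eapply Rle_trans. apply lsum_abs.
  eapply Rle_trans. apply (lsum_le _ (fun n => 2 * E * vv c n)).
  { intros n _. rewrite Rabs_mult. pose proof (Hep n). pose proof (Heq n).
    pose proof (fst_le_Cmod (c n)). pose proof (im_le_Cmod (c n)).
    eapply Rle_trans. apply Rmult_le_compat_l. apply Rabs_pos.
    eapply Rle_trans. apply Rabs_triang. rewrite Rabs_Ropp, !Rabs_mult.
    apply Rplus_le_compat; apply Rmult_le_compat; try apply Rabs_pos; eauto.
    unfold vv. pose proof (Rabs_pos (IZR n)). pose proof (Cmod_ge_0 (c n)).
    assert (0 <= E) by (eapply Rle_trans; [apply Rabs_pos | apply (Hep n)]).
    nra. }
  rewrite lsum_scal. eapply Rle_trans. apply Rmult_le_compat_l.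
  assert (0 <= E) by (eapply Rle_trans; [apply Rabs_pos | apply (Hep 0%Z)]). lra.
  eapply Rle_trans. apply lsum_le_sumZ. apply vv_summ, H. apply vv_nonneg. apply (vv_sum c B H HB).
  unfold E. apply Req_le. field. lra. Qed.

Lemma Cmod_sub_le (z w : C) : Cmod (Cminus z w) <= Cmod z + Cmod w.
Proof. unfold Cminus. eapply Rle_trans. apply Cmod_triangle. rewrite Cmod_opp. lra. Qed.
Lemma Cmod_le_sub (z w : C) : Cmod z <= Cmod (Cminus z w) + Cmod w.
Proof. replace z with (Cplus (Cminus z w) w) at 1. apply Cmod_triangle.
  apply injective_projections; simpl; ring. Qed.

Lemma H2_weight_ge1 n : 1 <= H2_weight n.
Proof. unfold H2_weight. pose proof (pow2_ge_0 (IZR n)). nra. Qed.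

Lemma in_H2_sub a b : in_H2 a -> in_H2 b -> in_H2 (state_sub a b).
Proof. intros Ha Hb. unfold in_H2.
  apply (summ_le _ (fun n => 2 * (H2_weight n * Cmod (a n) ^ 2) + 2 * (H2_weight n * Cmod (b n) ^ 2))).
  apply summ_plus; apply summ_scal; auto.
  intros n. rewrite Rabs_right by (apply Rle_ge, H2w_nonneg). unfold state_sub.
  pose proof (Cmod_sub_le (a n) (b n)). pose proof (Cmod_ge_0 (Cminus (a n) (b n))).
  pose proof (Cmod_ge_0 (a n)). pose proof (Cmod_ge_0 (b n)). pose proof (H2_weight_ge1 n).
  assert (Cmod (Cminus (a n) (b n)) ^ 2 <= 2 * Cmod (a n) ^ 2 + 2 * Cmod (b n) ^ 2).
  { pose proof (pow2_ge_0 (Cmod (a n) - Cmod (b n))).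
    assert (Cmod (Cminus (a n) (b n)) ^ 2 <= (Cmod (a n) + Cmod (b n)) ^ 2) by (apply pow_incr; lra). nra. }
  replace (2 * (H2_weight n * Cmod (a n) ^ 2) + 2 * (H2_weight n * Cmod (b n) ^ 2)) with
    (H2_weight n * (2 * Cmod (a n) ^ 2 + 2 * Cmod (b n) ^ 2)) by ring.
  apply Rmult_le_compat_l; lra. Qed.

Lemma sumZ_mono f g : summableZ g -> (forall j, 0 <= f j <= g j) -> sumZ f <= sumZ g.
Proof. intros Hg H. eapply Rle_trans. apply Rle_abs. apply sumZ_abs_le; auto.
  intros j; rewrite Rabs_right; [apply H| apply Rle_ge, H]. Qed.

Lemma coef_le_H2 a n : in_H2 a -> Cmod (a n) ^ 2 <= H2_norm_sq a.
Proof. intros Ha. eapply Rle_trans; [| apply (term_le_sumZ _ n Ha)]. 2: intros; apply H2w_nonneg.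
  pose proof (H2_weight_ge1 n). pose proof (pow2_ge_0 (Cmod (a n))). nra. Qed.

Lemma H2_tri a b : in_H2 a -> in_H2 b -> H2_norm_sq a <= 2 * H2_norm_sq (state_sub a b) + 2 * H2_norm_sq b.
Proof. intros Ha Hb. unfold H2_norm_sq at 2 3. rewrite <- !sumZ_scal, <- sumZ_plus.
  2,3: apply summ_scal; auto. 2: apply in_H2_sub; auto.
  apply sumZ_mono. apply summ_plus; apply summ_scal; auto. apply in_H2_sub; auto.
  intros n. split. apply H2w_nonneg. unfold state_sub.
  pose proof (Cmod_le_sub (a n) (b n)). pose proof (Cmod_ge_0 (Cminus (a n) (b n))).
  pose proof (Cmod_ge_0 (a n)). pose proof (Cmod_ge_0 (b n)). pose proof (H2_weight_ge1 n).
  assert (Cmod (a n) ^ 2 <= 2 * Cmod (Cminus (a n) (b n)) ^ 2 + 2 * Cmod (b n) ^ 2).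
  { pose proof (pow2_ge_0 (Cmod (Cminus (a n) (b n)) - Cmod (b n))).
    assert (Cmod (a n) ^ 2 <= (Cmod (Cminus (a n) (b n)) + Cmod (b n)) ^ 2) by (apply pow_incr; lra). nra. }
  replace (2 * (H2_weight n * Cmod (Cminus (a n) (b n)) ^ 2) + 2 * (H2_weight n * Cmod (b n) ^ 2)) with
    (H2_weight n * (2 * Cmod (Cminus (a n) (b n)) ^ 2 + 2 * Cmod (b n) ^ 2)) by ring.
  apply Rmult_le_compat_l; lra. Qed.

Definition ext (u : R -> state) : R -> state := fun t => u (Rmax 0 t).

Lemma Rmax0_lip s t : Rabs (Rmax 0 s - Rmax 0 t) <= Rabs (s - t).
Proof. unfold Rmax. destruct (Rle_dec 0 s), (Rle_dec 0 t); unfold Rabs; repeat destruct Rcase_abs; lra. Qed.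

Lemma ext_sol L delta u : is_kdv_solution L delta u ->
 (forall t, real_state (ext u t) /\ in_H2 (ext u t)) /\
 (forall t eps, 0 < eps -> exists d, 0 < d /\ forall s, Rabs (s - t) < d ->
     H2_norm_sq (state_sub (ext u s) (ext u t)) < eps) /\
 (forall n t, 0 < t -> is_derive (fun s => ext u s n) t (kdv_rhs L delta (ext u t) n)).
Proof. intros [H1 [H2 H3]]. split; [|split].
  - intros t. apply H1. apply Rmax_l.
  - intros t eps Heps. destruct (H2 (Rmax 0 t) (Rmax_l _ _) eps Heps) as [d [Hd Hc]].
    exists d; split; auto. intros s Hs. apply Hc. apply Rmax_l. pose proof (Rmax0_lip s t). unfold ext. lra.
  - intros n t Ht. unfold ext. rewrite (Rmax_right 0 t) by lra.
    eapply is_derive_ext_loc; [| apply (H3 n t Ht)].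
    exists (mkposreal t Ht). intros y Hy. simpl. rewrite Rmax_right. reflexivity.
    unfold ball in Hy; simpl in Hy; unfold AbsRing_ball, abs, minus, plus, opp in Hy; simpl in Hy.
    apply Rabs_def2 in Hy. lra. Qed.

Lemma fstd (f : R -> C) x l : is_derive f x l -> is_derive (fun s => fst (f s)) x (fst l).
Proof. intro H. unfold is_derive in *.
 eapply filterdiff_ext_lin. apply (filterdiff_comp' f fst x _ fst H). apply filterdiff_linear, is_linear_fst.
 intros y. reflexivity. Qed.
Lemma sndd (f : R -> C) x l : is_derive f x l -> is_derive (fun s => snd (f s)) x (snd l).
Proof. intro H. unfold is_derive in *.
 eapply filterdiff_ext_lin. apply (filterdiff_comp' f snd x _ snd H). apply filterdiff_linear, is_linear_snd.
 intros y. reflexivity. Qed.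
Lemma pair_d (f g : R -> R) x a b : is_derive f x a -> is_derive g x b -> is_derive (fun s => (f s, g s) : C) x ((a,b) : C).
Proof. intros Ha Hb. unfold is_derive in *.
 eapply filterdiff_ext_lin.
 apply (filterdiff_comp'_2 f g (fun u v => (u,v)) x _ _ (fun u v => (u,v)) Ha Hb).
 apply filterdiff_linear. apply (is_linear_ext (fun t => t)). intros [? ?]; reflexivity. apply is_linear_id.
 intros y. reflexivity. Qed.

Definition good_sol L delta (v : R -> state) : Prop :=
 (forall t, real_state (v t) /\ in_H2 (v t)) /\
 (forall t eps, 0 < eps -> exists d, 0 < d /\ forall s, Rabs (s - t) < d ->
     H2_norm_sq (state_sub (v s) (v t)) < eps) /\
 (forall n t, 0 < t -> is_derive (fun s => v s n) t (kdv_rhs L delta (v t) n)).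

Lemma cont_eps (f : R -> R) x : (forall eps, 0 < eps -> exists d, 0 < d /\ forall y, Rabs (y - x) < d -> Rabs (f y - f x) < eps) -> continuity_pt f x.
Proof. intros H eps Heps. destruct (H eps Heps) as [d [Hd H']]. exists d; split; auto.
  intros y [_ Hy]. apply H'. exact Hy. Qed.

Lemma coef_cont L delta v (pr : C -> R) n t : good_sol L delta v ->
  (forall z, Rabs (pr z) <= Cmod z) -> (forall z w, pr (Cminus z w) = pr z - pr w) ->
  continuity_pt (fun s => pr (v s n)) t.
Proof. intros [G1 [G2 G3]] Hpr Hlin. apply cont_eps. intros eps Heps.
  destruct (G2 t (eps ^ 2) ltac:(nra)) as [d [Hd Hc]]. exists d; split; auto. intros y Hy.
  specialize (Hc y Hy). pose proof (coef_le_H2 (state_sub (v y) (v t)) n (in_H2_sub _ _ (proj2 (G1 y)) (proj2 (G1 t)))).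
  assert (E : state_sub (v y) (v t) n = Cminus (v y n) (v t n)) by reflexivity. rewrite E in H. rewrite <- Hlin. pose proof (Hpr (Cminus (v y n) (v t n))).
  pose proof (Rabs_pos (pr (Cminus (v y n) (v t n)))). 
  destruct (Rlt_le_dec (Rabs (pr (Cminus (v y n) (v t n)))) eps); auto.
  exfalso. assert (eps ^ 2 <= Cmod (Cminus (v y n) (v t n)) ^ 2) by (apply pow_incr; lra). lra. Qed.

Lemma fst_cont L delta v n t : good_sol L delta v -> continuity_pt (fun s => fst (v s n)) t.
Proof. intros G. apply (coef_cont L delta v fst n t G). apply fst_le_Cmod. intros; simpl; ring. Qed.
Lemma snd_cont L delta v n t : good_sol L delta v -> continuity_pt (fun s => snd (v s n)) t.
Proof. intros G. apply (coef_cont L delta v snd n t G). apply im_le_Cmod. intros; simpl; ring. Qed.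

Lemma lsum_cont (g : Z -> R -> R) l x : (forall n, In n l -> continuity_pt (g n) x) ->
  continuity_pt (fun s => lsum (fun n => g n s) l) x.
Proof. induction l; simpl; intros H.
  - apply continuity_pt_const. intros ? ?; reflexivity.
  - apply (continuity_pt_plus (g a) (fun s => lsum (fun n => g n s) l)); auto. Qed.

Lemma is_derive_eq (f : R -> R) x l1 l2 : is_derive f x l1 -> l1 = l2 -> is_derive f x l2.
Proof. intros H <-; exact H. Qed.

Lemma lsum_deriv (g : Z -> R -> R) (dg : Z -> R) l x : (forall n, In n l -> is_derive (g n) x (dg n)) ->
  is_derive (fun s => lsum (fun n => g n s) l) x (lsum dg l).
Proof. induction l; simpl; intros H.
  - apply (is_derive_const 0 x).
  - apply (is_derive_plus (g a) (fun s => lsum (fun n => g n s) l)); auto. Qed.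

Lemma sq_deriv (f : R -> R) x l : is_derive f x l -> is_derive (fun s => f s ^ 2) x (2 * f x * l).
Proof. intros H. apply (is_derive_ext (fun s => f s * f s)). intros t. simpl; ring.
  eapply is_derive_eq. apply (is_derive_mult f f x l l H H). intros; apply Rmult_comm.
  unfold plus, mult; simpl. ring. Qed.

Definition EK (v : R -> state) (K : nat) (s : R) : R :=
  lsum (fun n => fst (v s n) ^ 2 + snd (v s n) ^ 2) (IZ (S K)).

Lemma EK_cont L delta v K x : good_sol L delta v -> continuity_pt (EK v K) x.
Proof. intros G. unfold EK. apply (lsum_cont (fun n s => fst (v s n) ^ 2 + snd (v s n) ^ 2)).
  intros n _. apply (continuity_pt_plus (fun s => fst (v s n) ^ 2) (fun s => snd (v s n) ^ 2)).
  - apply (continuity_pt_ext (fun s => fst (v s n) * fst (v s n))). intros; simpl; ring.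
    apply (continuity_pt_mult (fun s => fst (v s n)) (fun s => fst (v s n))); eapply fst_cont; eauto.
  - apply (continuity_pt_ext (fun s => snd (v s n) * snd (v s n))). intros; simpl; ring.
    apply (continuity_pt_mult (fun s => snd (v s n)) (fun s => snd (v s n))); eapply snd_cont; eauto. Qed.

Lemma EK_deriv L delta v K x : 0 < L -> good_sol L delta v -> 0 < x ->
  is_derive (EK v K) x (2 * PI / L * Dk (v x) (S K)).
Proof. intros HL G Hx. destruct G as [G1 [G2 G3]]. unfold EK.
  eapply is_derive_eq. apply (lsum_deriv (fun n s => fst (v s n) ^ 2 + snd (v s n) ^ 2)
    (fun n => 2 * fst (v x n) * fst (kdv_rhs L delta (v x) n) + 2 * snd (v x n) * snd (kdv_rhs L delta (v x) n))).
  - intros n _. apply (is_derive_plus (fun s => fst (v s n) ^ 2) (fun s => snd (v s n) ^ 2)).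
    + apply (sq_deriv (fun s => fst (v s n))). apply (fstd (fun s => v s n)). apply G3, Hx.
    + apply (sq_deriv (fun s => snd (v s n))). apply (sndd (fun s => v s n)). apply G3, Hx.
  - unfold Dk. rewrite <- lsum_scal. apply lsum_ext. intros n _. unfold kdv_rhs. simpl. field. lra.
Qed.

Definition En (v : R -> state) (s : R) : R := sumZ (fun n => Cmod (v s n) ^ 2).

Lemma cm2_summ c : in_H2 c -> summableZ (fun n => Cmod (c n) ^ 2).
Proof. intros H. apply (summ_le _ _ H). intros n. rewrite Rabs_right by (apply Rle_ge, pow2_ge_0).
  pose proof (H2_weight_ge1 n). pose proof (pow2_ge_0 (Cmod (c n))). nra. Qed.

Lemma EK_lim L delta v s : good_sol L delta v -> is_lim_seq (fun K => EK v K s) (En v s).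
Proof. intros G. eapply is_lim_seq_ext. 2: apply sumZ_lim, cm2_summ, (proj2 (proj1 G s)).
  intros K. unfold EK. apply lsum_ext. intros n _. rewrite Cmod2_alt. reflexivity. Qed.

Lemma inv_SK_lim : is_lim_seq (fun K => / INR (S K)) 0.
Proof. replace (Finite 0) with (Rbar_inv p_infty) by reflexivity.
  apply is_lim_seq_inv. eapply is_lim_seq_ext. intros n; symmetry; apply S_INR.
  eapply is_lim_seq_plus. apply is_lim_seq_INR. apply is_lim_seq_const.
  reflexivity. discriminate. Qed.

Lemma between_bound s r x : Rmin s r <= x <= Rmax s r -> Rabs (x - s) <= Rabs (r - s).
Proof. unfold Rmin, Rmax. destruct (Rle_dec s r); intros [H1 H2]; unfold Rabs; repeat destruct Rcase_abs; lra. Qed.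

Lemma between_pos s r x : 0 <= s -> 0 <= r -> Rmin s r < x -> 0 < x.
Proof. unfold Rmin. destruct (Rle_dec s r); lra. Qed.

Lemma En_LC L delta v : 0 < L -> good_sol L delta v -> forall s, 0 <= s ->
  exists d, 0 < d /\ forall r, 0 <= r -> Rabs (r - s) < d -> En v r = En v s.
Proof. intros HL G s Hs. pose proof G as [G1 [G2 G3]].
  destruct (G2 s 1 Rlt_0_1) as [d [Hd Hc]].
  set (Bd := 2 * 1 + 2 * H2_norm_sq (v s)).
  assert (HB : forall x, Rabs (x - s) < d -> H2_norm_sq (v x) <= Bd).
  { intros x Hx. pose proof (H2_tri (v x) (v s) (proj2 (G1 x)) (proj2 (G1 s))). pose proof (Hc x Hx). unfold Bd. lra. }
  assert (HBd : 0 <= Bd) by (unfold Bd; pose proof (H2_nonneg _ (proj2 (G1 s))); lra).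
  exists d; split; auto. intros r Hr Hrs.
  assert (Hk : 0 < 2 * PI / L) by (apply Rdiv_lt_0_compat; [pose proof PI_RGT_0; lra | lra]).
  set (Cst := 2 * PI / L * Rabs (r - s) * ((1 + Bd) * (Bd + C2) ^ 2 / 2)).
  assert (HC : 0 <= Cst).
  { unfold Cst. pose proof C2_nonneg. pose proof (Rabs_pos (r - s)). apply Rmult_le_pos. nra.
    apply Rmult_le_pos; [|lra]. apply Rmult_le_pos. lra. apply pow2_ge_0. }
  assert (Bnd : forall K, Rabs (EK v K r - EK v K s) <= Cst * / INR (S K)).
  { intros K. destruct (MVT_gen (EK v K) s r (fun x => 2 * PI / L * Dk (v x) (S K))) as [xi [Hxi E]].
    - intros x Hx. apply (EK_deriv L delta); auto. eapply between_pos; [exact Hs| exact Hr| apply Hx].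
    - intros x _. eapply EK_cont; eauto.
    - rewrite E. pose proof (between_bound s r xi Hxi).
      pose proof (Dk_bound (v xi) Bd K (proj1 (G1 xi)) (proj2 (G1 xi)) (HB xi ltac:(lra))).
      assert (HN : 0 < INR (S K)) by (rewrite S_INR; pose proof (pos_INR K); lra).
      rewrite !Rabs_mult. rewrite (Rabs_right (2 * PI / L)) by lra.
      replace (Cst * / INR (S K)) with (2 * PI / L * ((1 + Bd) * (Bd + C2) ^ 2 / (2 * INR (S K))) * Rabs (r - s))
        by (unfold Cst; field; lra).
      apply Rmult_le_compat_r. apply Rabs_pos. apply Rmult_le_compat_l; lra. }
  assert (L1 : is_lim_seq (fun K => EK v K r - EK v K s) (En v r - En v s)).
  { apply is_lim_seq_minus'; eapply EK_lim; eauto. }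
  assert (L0 : is_lim_seq (fun K => Cst * / INR (S K)) 0).
  { replace (Finite 0) with (Rbar_mult Cst 0) by (simpl; f_equal; ring). apply is_lim_seq_scal_l, inv_SK_lim. }
  assert (L0' : is_lim_seq (fun K => - (Cst * / INR (S K))) 0).
  { replace (Finite 0) with (Rbar_opp 0) by (simpl; f_equal; ring). apply -> is_lim_seq_opp. exact L0. }
  assert (L2 : is_lim_seq (fun K => EK v K r - EK v K s) 0).
  { eapply is_lim_seq_le_le; [| exact L0' | exact L0]. intros K. specialize (Bnd K). pose proof (Rle_abs (EK v K r - EK v K s)). pose proof (Rle_abs (-(EK v K r - EK v K s))). rewrite Rabs_Ropp in *. lra. }
  apply is_lim_seq_unique in L1. apply is_lim_seq_unique in L2. rewrite L1 in L2. injection L2. lra. Qed.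

Lemma En_deriv0 L delta v x : 0 < L -> good_sol L delta v -> 0 < x -> is_derive (En v) x 0.
Proof. intros HL G Hx. destruct (En_LC L delta v HL G x (Rlt_le _ _ Hx)) as [d [Hd H]].
  apply (is_derive_ext_loc (fun _ => En v x)). 2: apply (is_derive_const (En v x) x).
  assert (Hm : 0 < Rmin d x) by (apply Rmin_pos; lra).
  exists (mkposreal _ Hm). intros y Hy. simpl.
  unfold ball in Hy; simpl in Hy; unfold AbsRing_ball, abs, minus, plus, opp in Hy; simpl in Hy.
  pose proof (Rmin_l d x). pose proof (Rmin_r d x). apply Rabs_def2 in Hy as Hy'.
  symmetry. apply H. lra. apply Rabs_def1; lra. Qed.

Lemma En_const L delta v : 0 < L -> good_sol L delta v -> forall t, 0 <= t -> En v t = En v 0.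
Proof. intros HL G t Ht. destruct (En_LC L delta v HL G 0 (Rle_refl 0)) as [d0 [Hd0 H0]].
  destruct (Rlt_le_dec t d0) as [Hlt|Hge].
  - apply H0; auto. rewrite Rminus_0_r, Rabs_right; lra.
  - set (e := d0 / 2). assert (He : 0 < e) by (unfold e; lra).
    destruct (MVT_gen (En v) e t (fun _ => 0)) as [xi [_ E]].
    + intros x Hx. apply (En_deriv0 L delta); auto. unfold Rmin in Hx. destruct Rle_dec in Hx; lra.
    + intros x Hx. apply derivable_continuous_pt. exists 0. apply is_derive_Reals.
      apply (En_deriv0 L delta); auto. unfold Rmin in Hx. destruct Rle_dec in Hx; lra.
    + rewrite Rmult_0_l in E. rewrite <- (H0 e). lra. lra. rewrite Rminus_0_r, Rabs_right; unfold e; lra. Qed.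

Lemma mean_const L delta v : good_sol L delta v -> forall t, 0 <= t -> v t 0%Z = v 0 0%Z.
Proof. intros G t Ht. destruct (Req_dec t 0) as [->|Hne]; auto. pose proof G as [G1 [G2 G3]].
  assert (Hd : forall x, 0 < x -> fst (kdv_rhs L delta (v x) 0) = 0 /\ snd (kdv_rhs L delta (v x) 0) = 0).
  { intros x _. unfold kdv_rhs. simpl. rewrite !Rmult_0_r, !Rmult_0_l. unfold Rdiv. rewrite !Rmult_0_l, !Rmult_0_r. split; ring. }
  apply injective_projections.
  - destruct (MVT_gen (fun s => fst (v s 0%Z)) 0 t (fun _ => 0)) as [xi [_ E]].
    + intros x Hx. eapply is_derive_eq. apply (fstd (fun s => v s 0%Z)). apply G3.
      unfold Rmin in Hx; destruct Rle_dec in Hx; lra. apply Hd. unfold Rmin in Hx; destruct Rle_dec in Hx; lra.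
    + intros x _. eapply fst_cont; eauto.
    + simpl in E. lra.
  - destruct (MVT_gen (fun s => snd (v s 0%Z)) 0 t (fun _ => 0)) as [xi [_ E]].
    + intros x Hx. eapply is_derive_eq. apply (sndd (fun s => v s 0%Z)). apply G3.
      unfold Rmin in Hx; destruct Rle_dec in Hx; lra. apply Hd. unfold Rmin in Hx; destruct Rle_dec in Hx; lra.
    + intros x _. eapply snd_cont; eauto.
    + simpl in E. lra. Qed.

Definition phase (al : R) (n : Z) : C := (cos (al * IZR n), sin (al * IZR n)).
Definition Sh (al : R) (c : state) : state := fun n => Cmult (phase al n) (c n).

Lemma phase_mul al n m : Cmult (phase al m) (phase al (n - m)%Z) = phase al n.
Proof. unfold phase. rewrite minus_IZR. apply injective_projections; simpl.
  - replace (al * IZR n) with (al * IZR m + al * (IZR n - IZR m)) by ring. rewrite cos_plus. ring.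
  - replace (al * IZR n) with (al * IZR m + al * (IZR n - IZR m)) by ring. rewrite sin_plus. ring. Qed.

Lemma phase_norm al n : fst (phase al n) ^ 2 + snd (phase al n) ^ 2 = 1.
Proof. unfold phase; simpl. pose proof (sin2_cos2 (al * IZR n)). unfold Rsqr in H. lra. Qed.

Lemma Cmod_Sh al c n : Cmod (Sh al c n) = Cmod (c n).
Proof. unfold Sh. rewrite Cmod_mult. replace (Cmod (phase al n)) with 1. ring.
  unfold Cmod. rewrite phase_norm. symmetry; apply sqrt_1. Qed.

Lemma Sh_real al c : real_state c -> real_state (Sh al c).
Proof. intros H n. unfold Sh. rewrite H. unfold phase. rewrite opp_IZR.
  replace (al * - IZR n) with (- (al * IZR n)) by ring. rewrite cos_neg, sin_neg.
  destruct (c n). apply injective_projections; simpl; ring. Qed.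

Lemma Sh_H2 al c : in_H2 c -> in_H2 (Sh al c) /\ H2_norm_sq (Sh al c) = H2_norm_sq c.
Proof. intros H. split.
  - apply (summ_le _ _ H). intros n. rewrite Cmod_Sh. rewrite Rabs_right. lra. apply Rle_ge, H2w_nonneg.
  - apply sumZ_ext. intros n. rewrite Cmod_Sh. reflexivity. Qed.

Lemma Sh_sub al a b : state_sub (Sh al a) (Sh al b) = Sh al (state_sub a b).
Proof. apply functional_extensionality. intros n. unfold Sh, state_sub.
  destruct (phase al n), (a n), (b n). apply injective_projections; simpl; ring. Qed.

Lemma conv_Sh al c : in_H2 c -> forall n, conv (Sh al c) n = Cmult (phase al n) (conv c n).
Proof. intros H n. pose proof (Rle_refl (H2_norm_sq c)) as HB.
  assert (S1 := prod_summ c _ n fst H HB fst_le_Cmod).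
  assert (S2 := prod_summ c _ n snd H HB im_le_Cmod).
  assert (E : forall m, Cmult (Sh al c m) (Sh al c (n - m)%Z) = Cmult (phase al n) (Cmult (c m) (c (n - m)%Z))).
  { intros m. unfold Sh. rewrite <- (phase_mul al n m). destruct (phase al m), (phase al (n - m)%Z), (c m), (c (n - m)%Z).
    apply injective_projections; simpl; ring. }
  unfold conv. unfold Re, Im. apply injective_projections; cbn [fst snd].
  - rewrite (sumZ_ext _ (fun m => fst (phase al n) * fst (Cmult (c m) (c (n - m)%Z)) - snd (phase al n) * snd (Cmult (c m) (c (n - m)%Z)))).
    rewrite sumZ_minus, !sumZ_scal. reflexivity. apply summ_scal, S1. apply summ_scal, S2.
    intros m. rewrite E. destruct (phase al n), (Cmult (c m) (c (n - m)%Z)). simpl. ring.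
  - rewrite (sumZ_ext _ (fun m => fst (phase al n) * snd (Cmult (c m) (c (n - m)%Z)) + snd (phase al n) * fst (Cmult (c m) (c (n - m)%Z)))).
    rewrite sumZ_plus, !sumZ_scal. reflexivity. apply summ_scal, S2. apply summ_scal, S1.
    intros m. rewrite E. destruct (phase al n), (Cmult (c m) (c (n - m)%Z)). simpl. ring. Qed.

Lemma rhs_Sh L delta al c : in_H2 c -> forall n, kdv_rhs L delta (Sh al c) n = Cmult (phase al n) (kdv_rhs L delta c n).
Proof. intros H n. unfold kdv_rhs. rewrite conv_Sh by auto. unfold Sh.
  destruct (phase al n), (conv c n), (c n). apply injective_projections; simpl; ring. Qed.

Lemma cmul_deriv (p : C) (f : R -> C) x l : is_derive f x l -> is_derive (fun s => Cmult p (f s)) x (Cmult p l).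
Proof. intros H. destruct p as [a b].
  apply (is_derive_ext (fun s => (a * fst (f s) - b * snd (f s), a * snd (f s) + b * fst (f s)) : C)).
  { intros s. unfold Cmult. simpl. f_equal; ring. }
  eapply (is_derive_ext _ _ _ _ (fun _ => eq_refl)).
  replace (Cmult (a, b) l) with ((a * fst l - b * snd l, a * snd l + b * fst l) : C) by (unfold Cmult; simpl; f_equal; ring).
  apply pair_d.
  - apply (is_derive_minus (fun s => a * fst (f s)) (fun s => b * snd (f s))); apply is_derive_scal.
    apply (fstd f), H. apply (sndd f), H.
  - apply (is_derive_plus (fun s => a * snd (f s)) (fun s => b * fst (f s))); apply is_derive_scal.
    apply (sndd f), H. apply (fstd f), H. Qed.

Lemma Sh_sol L delta al u : is_kdv_solution L delta u -> is_kdv_solution L delta (fun t => Sh al (u t)).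
Proof. intros [H1 [H2 H3]]. split; [|split].
  - intros t Ht. destruct (H1 t Ht) as [Hr Hh]. split. apply Sh_real, Hr. apply Sh_H2, Hh.
  - intros t Ht eps Heps. destruct (H2 t Ht eps Heps) as [d [Hd Hc]]. exists d; split; auto.
    intros s Hs Hst. rewrite Sh_sub. rewrite (proj2 (Sh_H2 al _ (in_H2_sub _ _ (proj2 (H1 s Hs)) (proj2 (H1 t Ht))))).
    apply Hc; auto.
  - intros n t Ht. rewrite rhs_Sh. unfold Sh. apply (cmul_deriv (phase al n) (fun s => u s n)). apply H3, Ht.
    apply H1; lra. Qed.

Lemma zero_summ_H2 : in_H2 (fun _ => 0%C).
Proof. apply (summ_le _ _ summ_zero). intros n. rewrite Cmod_0. simpl. rewrite !Rmult_0_l, Rmult_0_r, Rabs_R0. lra. Qed.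

Lemma H2_zero : H2_norm_sq (fun _ => 0%C) = 0.
Proof. unfold H2_norm_sq. transitivity (sumZ (fun _ => 0)); [|apply sumZ_zero]. apply sumZ_ext. intros n. rewrite Cmod_0. ring. Qed.

Lemma zero_sol L delta : is_kdv_solution L delta (fun _ _ => 0%C).
Proof. split; [|split].
  - intros t _. split. intros n. apply injective_projections; simpl; ring. apply zero_summ_H2.
  - intros t _ eps Heps. exists 1. split. lra. intros s _ _.
    assert (E : state_sub (fun _ : Z => 0%C) (fun _ : Z => 0%C) = (fun _ : Z => 0%C)).
    { apply functional_extensionality. intros n. unfold state_sub. apply injective_projections; simpl; ring. }
    cbv beta. rewrite E, H2_zero. exact Heps.
  - intros n t _. 
    assert (E : kdv_rhs L delta (fun _ => 0%C) n = 0%C).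
    { unfold kdv_rhs, conv. rewrite (sumZ_ext _ (fun _ => 0)), sumZ_zero. 2: intros; simpl; ring.
      rewrite (sumZ_ext (fun m => Im _) (fun _ => 0)), sumZ_zero. 2: intros; simpl; ring.
      apply injective_projections; simpl; ring. }
    rewrite E. apply (@is_derive_const R_AbsRing (prod_NormedModule R_AbsRing R_NormedModule R_NormedModule) ((0,0) : C) t). Qed.

Lemma adm_zero : admissible_data (fun _ => 0%C).
Proof. split; [|split]. intros n. apply injective_projections; simpl; ring. reflexivity. apply zero_summ_H2. Qed.

Lemma fix_zero (p z : C) : fst p ^ 2 + snd p ^ 2 = 1 -> fst p <> 1 -> z = Cmult p z -> z = 0%C.
Proof. destruct p as [a b], z as [x y]. simpl. intros Hn Ha Hz.
  assert (E1 : x = a * x - b * y) by (apply (f_equal fst) in Hz; simpl in Hz; lra).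
  assert (E2 : y = a * y + b * x) by (apply (f_equal snd) in Hz; simpl in Hz; lra).
  assert (Hlt : a < 1). { assert (a <= 1) by nra. lra. }
  assert (Hp : 0 < (1 - a) ^ 2 + b ^ 2) by nra.
  assert (e1 : (1 - a) * x + b * y = 0) by lra. assert (e2 : b * x - (1 - a) * y = 0) by lra.
  assert (X : ((1 - a) ^ 2 + b ^ 2) * x = 0).
  { replace (((1 - a) ^ 2 + b ^ 2) * x) with ((1 - a) * ((1 - a) * x + b * y) + b * (b * x - (1 - a) * y)) by ring.
    rewrite e1, e2; ring. }
  assert (Y : ((1 - a) ^ 2 + b ^ 2) * y = 0).
  { replace (((1 - a) ^ 2 + b ^ 2) * y) with (b * ((1 - a) * x + b * y) - (1 - a) * (b * x - (1 - a) * y)) by ring.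
    rewrite e1, e2; ring. }
  apply Rmult_integral in X, Y. destruct X as [X|X]; [lra|]. destruct Y as [Y|Y]; [lra|].
  subst. reflexivity. Qed.

Lemma phase_ne1 (N : nat) n : (0 < Z.abs n < Z.of_nat N)%Z -> cos (2 * PI / INR N * IZR n) <> 1.
Proof. intros Hn Hc. assert (HN : 0 < INR N) by (apply lt_0_INR; lia).
  set (x := 2 * PI / INR N * IZR n) in *.
  assert (Hs : sin x = 0). { pose proof (sin2_cos2 x). rewrite Hc in H. unfold Rsqr in H. nra. }
  apply sin_eq_0_0 in Hs. destruct Hs as [k Hk]. unfold x in Hk.
  assert (E : IZR (2 * n) = IZR (k * Z.of_nat N)).
  { rewrite !mult_IZR, <- INR_IZR_INZ. apply Rmult_eq_reg_l with (PI / INR N).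
    2: { apply Rgt_not_eq. apply Rdiv_lt_0_compat. apply PI_RGT_0. lra. }
    replace (PI / INR N * (IZR 2 * IZR n)) with (2 * PI / INR N * IZR n) by (field; lra).
    rewrite Hk. field. lra. }
  apply eq_IZR in E. assert (k = 1 \/ k = -1)%Z by nia. unfold x in Hc. rewrite Hk in Hc.
  destruct H as [-> | ->]; simpl in Hc.
  - rewrite Rmult_1_l, cos_PI in Hc. lra.
  - replace (-1 * PI) with (- PI) in Hc by ring. rewrite cos_neg, cos_PI in Hc. lra. Qed.

Theorem theorem3p7 (L delta : R) (hL : 0 < L)
  (hwp : globally_well_posed L delta) :
  ~ (exists M : nat, (0 < M)%nat /\ determining_modes L delta M).
Proof.
  intros [M [HM Hdm]].
  set (N := S M). set (Nz := Z.of_nat N). set (al := 2 * PI / INR N).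
  assert (HN : 0 < INR N) by (apply lt_0_INR; unfold N; lia).
  set (c0 := fun n : Z => if Z.eq_dec (Z.abs n) Nz then RtoC 1 else RtoC 0).
  assert (Hadm : admissible_data c0).
  { split; [|split].
    - intros n. unfold c0. rewrite Z.abs_opp. destruct Z.eq_dec; apply injective_projections; simpl; ring.
    - unfold mean_zero, c0. destruct Z.eq_dec; auto. unfold Nz, N in e. simpl in e. lia.
    - unfold in_H2. apply (sumZ_fin _ N). intros j Hj. cbv beta. unfold c0. destruct Z.eq_dec. unfold Nz in e. lia.
      rewrite Cmod_0. ring. }
  assert (Shc0 : Sh al c0 = c0).
  { apply functional_extensionality. intros n. unfold Sh, c0. destruct Z.eq_dec as [e|e].
    - assert (Hp : phase al n = RtoC 1).
      { unfold phase, al. assert (IZR n = INR N \/ IZR n = - INR N).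
        { rewrite INR_IZR_INZ. fold Nz. destruct (Z.abs_spec n) as [[_ E]|[_ E]]; rewrite E in e.
          left; f_equal; auto. right; rewrite <- opp_IZR; f_equal; lia. }
        destruct H as [-> | ->].
        - replace (2 * PI / INR N * INR N) with (2 * PI) by (field; lra). rewrite cos_2PI, sin_2PI. reflexivity.
        - replace (2 * PI / INR N * - INR N) with (- (2 * PI)) by (field; lra).
          rewrite cos_neg, sin_neg, cos_2PI, sin_2PI. apply injective_projections; simpl; ring. }
      rewrite Hp. apply injective_projections; simpl; ring.
    - apply injective_projections; simpl; ring. }
  destruct (hwp c0 Hadm) as [[u [Hu Hu0]] Huniq].
  assert (Hsym : forall t, 0 <= t -> u t = Sh al (u t)).
  { intros t Ht. apply (Huniq u (fun t => Sh al (u t)) Hu (Sh_sol L delta al u Hu) Hu0); auto.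
    rewrite Hu0. exact Shc0. }
  pose proof (ext_sol L delta u Hu) as Gv. fold (good_sol L delta (ext u)) in Gv.
  assert (Hext : forall t, 0 <= t -> ext u t = u t) by (intros t Ht; unfold ext; rewrite Rmax_right; auto).
  assert (Hlow : forall t, 0 <= t -> forall n, (Z.abs n <= Z.of_nat M)%Z -> u t n = 0%C).
  { intros t Ht n Hn. destruct (Z.eq_dec n 0) as [->|Hn0].
    - rewrite <- Hext by auto. rewrite (mean_const L delta (ext u) Gv t Ht). rewrite Hext by lra.
      rewrite Hu0. apply (proj1 (proj2 Hadm)).
    - apply (fix_zero (phase al n)). apply phase_norm.
      unfold phase, al. cbn [fst]. apply (phase_ne1 N). unfold N; lia.
      pose proof (Hsym t Ht) as E. apply (f_equal (fun c => c n)) in E. exact E. }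
  set (z := fun (_ : R) (_ : Z) => 0%C).
  assert (HP : is_lim (fun t => L2_norm L (P M (state_sub (u t) (z t)))) p_infty 0).
  { apply (is_lim_ext_loc (fun _ => 0)). 2: apply is_lim_const.
    exists 0. intros t Ht. unfold L2_norm.
    rewrite (sumZ_ext _ (fun _ => 0)), sumZ_zero, Rmult_0_r, sqrt_0. reflexivity.
    intros n. unfold P, state_sub, z. destruct (Z.leb_spec (Z.abs n) (Z.of_nat M)).
    - rewrite Hlow by lra || auto. replace (Cminus 0%C 0%C) with (RtoC 0) by (apply injective_projections; simpl; ring).
      rewrite Cmod_0. ring.
    - rewrite Cmod_0. ring. }
  pose proof (Hdm u z Hu (zero_sol L delta) (ltac:(rewrite Hu0; exact Hadm)) adm_zero HP) as Hlim.
  set (V := sqrt (L * En (ext u) 0)).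
  assert (HV : 0 < V).
  { unfold V. apply sqrt_lt_R0. apply Rmult_lt_0_compat; auto.
    assert (Hs : summableZ (fun n => Cmod (ext u 0 n) ^ 2)) by apply cm2_summ, (proj2 (proj1 Gv 0)).
    eapply Rlt_le_trans; [| apply (term_le_sumZ _ Nz Hs)]. 2: intros; apply pow2_ge_0.
    rewrite Hext by lra. rewrite Hu0. unfold c0. destruct Z.eq_dec as [_|e].
    rewrite Cmod_1. lra. exfalso; apply e. unfold Nz; lia. }
  assert (Hlim2 : is_lim (fun t => L2_norm L (state_sub (u t) (z t))) p_infty V).
  { apply (is_lim_ext_loc (fun _ => V)). 2: apply is_lim_const.
    exists 0. intros t Ht. unfold L2_norm, V. rewrite <- (En_const L delta (ext u) hL Gv t) by lra.
    unfold En. f_equal. f_equal. apply sumZ_ext. intros n. rewrite Hext by lra. unfold state_sub, z.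
    f_equal. f_equal. apply injective_projections; simpl; ring. }
  apply is_lim_unique in Hlim. apply is_lim_unique in Hlim2. rewrite Hlim in Hlim2.
  injection Hlim2. lra.
Qed.
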